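(* Let $g\colon(0,1)\to\mathbb{R}$ be a continuous, strictly increasing function such that $g(1-a)=-g(a)$ for all $a\in(0,1)$ and $\lim_{a\to0^+}g(a)=-\infty$, and let $J(a,b)=g^{-1}\bigl(g(a)-g(b)\bigr)$ for $(a,b)\in S=(0,1)\times(0,1)$. If $g$ is continuously differentiable on $(0,1)$ with $g'$ never equal to $0$, then $J$ is differentiable on $S$. Conversely, if $J$ is differentiable on $S$, then $g$ is differentiable on $(0,1)$ and $g'$ is never $0$. *)

(* Defs.v *)
From Stdlib Require Import Reals ClassicalEpsilon.
From Coquelicot Require Import Coquelicot.
Open Scope R_scope.

Definition ginv (g : R -> R) (y : R) : R :=
  epsilon (inhabits 0) (fun a => 0 < a < 1 /\ g a = y).

Definition Jfun (g : R -> R) (a b : R) : R := ginv g (g a - g b).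

Definition J_differentiable_on_S (g : R -> R) : Prop :=
  forall a b : R, 0 < a < 1 -> 0 < b < 1 ->
    ex_filterdiff (fun p : R * R => Jfun g (fst p) (snd p)) (locally (a, b)).

(* Main.v *)
Require Import Defs.
From Stdlib Require Import Reals Lra Lia Ranalysis5 ClassicalEpsilon Classical.
From Stdlib Require Cantor.
From Stdlib Require Import ZArith.
From Coquelicot Require Import Coquelicot.
Open Scope R_scope.

Definition Hg (g : R -> R) : Prop :=
  (forall a, 0 < a < 1 -> continuous g a) /\
  (forall a b, 0 < a < 1 -> 0 < b < 1 -> a < b -> g a < g b) /\
  (forall a, 0 < a < 1 -> g (1 - a) = - g a) /\
  filterlim g (at_right 0) (Rbar_locally m_infty).

Lemma g_half g : Hg g -> g (1/2) = 0.
Proof.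
  intros (_&_&Hs&_). pose proof (Hs (1/2) ltac:(lra)) as E.
  replace (1 - 1/2) with (1/2) in E by field. lra.
Qed.

Lemma g_le_iff g : Hg g -> forall a b, 0 < a < 1 -> 0 < b < 1 -> (g a <= g b <-> a <= b).
Proof.
  intros (_&Hi&_) a b Ha Hb. split; intro H.
  - destruct (Rle_or_lt a b) as [|Hl]; auto. pose proof (Hi b a Hb Ha Hl); lra.
  - destruct H as [H|H]. pose proof (Hi a b Ha Hb H); lra. subst; lra.
Qed.

Lemma g_lt_iff g : Hg g -> forall a b, 0 < a < 1 -> 0 < b < 1 -> (g a < g b <-> a < b).
Proof.
  intros HG a b Ha Hb. pose proof (g_le_iff g HG b a Hb Ha). split; intro H1.
  destruct (Rlt_or_le a b); auto. apply H in H0; lra.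
  destruct (Rlt_or_le (g a) (g b)); auto. apply H in H0; lra.
Qed.

Lemma g_below g : Hg g -> forall y, exists a, 0 < a < 1 /\ g a < y.
Proof.
  intros (_&_&_&Hl) y.
  assert (Hr : Rbar_locally m_infty (fun z => z < y)) by (exists y; auto).
  pose proof (Hl _ Hr) as [d Hd]. simpl in Hd.
  set (x := Rmin (d/2) (1/2)).
  assert (Hd2 : 0 < d) by apply cond_pos.
  assert (0 < x) by (unfold x; apply Rmin_glb_lt; lra).
  assert (x <= d/2) by apply Rmin_l. assert (x <= 1/2) by apply Rmin_r.
  exists x; split; [lra|]. apply Hd; [|lra].
  unfold ball; simpl; unfold AbsRing_ball, minus, plus, opp; simpl.
  rewrite Rabs_right; lra.
Qed.

Lemma g_above g : Hg g -> forall y, exists a, 0 < a < 1 /\ y < g a.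
Proof.
  intros HG y. destruct (g_below g HG (-y)) as [a [Ha Hy]].
  exists (1-a). split; [lra|]. destruct HG as (_&_&Hs&_). rewrite Hs; auto; lra.
Qed.

Lemma g_cpt g : Hg g -> forall a, 0 < a < 1 -> continuity_pt g a.
Proof. intros (Hc&_) a Ha. apply continuity_pt_filterlim, Hc, Ha. Qed.

Lemma g_surj g : Hg g -> forall y, exists a, 0 < a < 1 /\ g a = y.
Proof.
  intros HG y. destruct (g_below g HG y) as [a1 [H1 E1]].
  destruct (g_above g HG y) as [a2 [H2 E2]].
  assert (a1 < a2) by (apply (g_lt_iff g HG); auto; lra).
  destruct (IVT_interv (fun x => g x - y) a1 a2) as [z [Hz Ez]]; auto; try lra.
  intros a Ha. apply continuity_pt_minus. apply g_cpt; auto; lra. apply continuity_pt_const. intros u v; auto.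
  exists z; split; lra.
Qed.

Lemma ginv_spec g : Hg g -> forall y, 0 < ginv g y < 1 /\ g (ginv g y) = y.
Proof.
  intros HG y. unfold ginv. apply (epsilon_spec (inhabits 0) (fun a => 0 < a < 1 /\ g a = y)).
  destruct (g_surj g HG y) as [a Ha]; eauto.
Qed.

Lemma ginv_g g : Hg g -> forall a, 0 < a < 1 -> ginv g (g a) = a.
Proof.
  intros HG a Ha. destruct (ginv_spec g HG (g a)) as [H1 H2].
  pose proof (g_le_iff g HG _ _ H1 Ha). pose proof (g_le_iff g HG _ _ Ha H1). 
  rewrite H2 in *. apply Rle_antisym; [apply H|apply H0]; lra.
Qed.

Lemma ginv_lt g : Hg g -> forall y1 y2, y1 < y2 -> ginv g y1 < ginv g y2.
Proof.
  intros HG y1 y2 H. destruct (ginv_spec g HG y1) as [A1 B1]. destruct (ginv_spec g HG y2) as [A2 B2].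
  apply (g_lt_iff g HG); auto. lra.
Qed.

Lemma ginv_cpt g : Hg g -> forall y, continuity_pt (ginv g) y.
Proof.
  intros HG y eps Heps. destruct (ginv_spec g HG y) as [Hx Ex].
  set (x := ginv g y) in *.
  set (e := Rmin eps (Rmin (x/2) ((1-x)/2))).
  assert (0 < e) by (unfold e; repeat apply Rmin_glb_lt; lra).
  assert (e <= eps) by apply Rmin_l.
  assert (e <= x/2) by (unfold e; eapply Rle_trans; [apply Rmin_r| apply Rmin_l]).
  assert (e <= (1-x)/2) by (unfold e; eapply Rle_trans; [apply Rmin_r| apply Rmin_r]).
  assert (Hl : g (x - e) < y) by (rewrite <- Ex; apply (g_lt_iff g HG); lra).
  assert (Hu : y < g (x + e)) by (rewrite <- Ex; apply (g_lt_iff g HG); lra).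
  exists (Rmin (y - g (x-e)) (g (x+e) - y)). split.
  apply Rmin_glb_lt; lra.
  intros z [_ Hz]. simpl in *. unfold R_dist in *.
  pose proof (Rmin_l (y - g (x-e)) (g (x+e) - y)). pose proof (Rmin_r (y - g (x-e)) (g (x+e) - y)).
  apply Rabs_def2 in Hz.
  assert (ginv g (g (x-e)) < ginv g z) by (apply ginv_lt; auto; lra).
  assert (ginv g z < ginv g (g (x+e))) by (apply ginv_lt; auto; lra).
  rewrite ginv_g in *; auto; try lra. apply Rabs_def1; lra.
Qed.


Lemma inv_close r d eps : d <> 0 -> 0 < eps ->
  Rabs (r - d) < Rmin (Rabs d / 2) (eps * (Rabs d * Rabs d) / 2) -> Rabs (/ r - / d) < eps.
Proof.
  intros Hd He H.
  pose proof (Rmin_l (Rabs d / 2) (eps * (Rabs d * Rabs d) / 2)).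
  pose proof (Rmin_r (Rabs d / 2) (eps * (Rabs d * Rabs d) / 2)).
  assert (Ha : 0 < Rabs d) by (apply Rabs_pos_lt; auto).
  assert (Hr : Rabs d / 2 < Rabs r).
  { pose proof (Rabs_triang_inv d (d - r)). replace (d - (d - r)) with r in H2 by ring.
    rewrite Rabs_minus_sym in H2. lra. }
  assert (r <> 0) by (intro; subst; rewrite Rabs_R0 in Hr; lra).
  replace (/ r - / d) with ((d - r) / (r * d)) by (field; auto).
  unfold Rdiv. rewrite Rabs_mult, Rabs_inv, Rabs_mult, Rabs_minus_sym.
  assert (HX : 0 < Rabs r * Rabs d) by nra.
  apply (Rmult_lt_reg_r (Rabs r * Rabs d)); auto.
  rewrite Rmult_assoc, Rinv_l by lra. rewrite Rmult_1_r.
  rewrite Rabs_minus_sym.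
  assert (0 < eps * (Rabs r - Rabs d / 2) * Rabs d) by (apply Rmult_lt_0_compat; [apply Rmult_lt_0_compat|]; lra).
  rewrite Rabs_minus_sym in H. nra.
Qed.

Lemma ginv_deriv g y0 d : Hg g -> derivable_pt_lim g (ginv g y0) d -> d <> 0 ->
  derivable_pt_lim (ginv g) y0 (/ d).
Proof.
  intros HG Hd Hd0 eps Heps.
  set (c := ginv g y0).
  destruct (ginv_spec g HG y0) as [Hc Ec]. fold c in Hc, Ec.
  set (eta := Rmin (Rabs d / 2) (eps * (Rabs d * Rabs d) / 2)).
  assert (0 < eta).
  { unfold eta; pose proof (Rabs_pos_lt d Hd0); apply Rmin_glb_lt. lra.
    assert (0 < Rabs d * Rabs d) by (apply Rmult_lt_0_compat; lra). 
    assert (0 < eps * (Rabs d * Rabs d)) by (apply Rmult_lt_0_compat; lra). lra. }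
  destruct (Hd eta H) as [d1 Hd1].
  destruct (ginv_cpt g HG y0 d1 (cond_pos d1)) as [d2 [Hd2 Hd2']].
  exists (mkposreal d2 Hd2). intros h Hh0 Hh. simpl in Hh.
  set (x := ginv g (y0 + h)). destruct (ginv_spec g HG (y0+h)) as [Hx Ex]. fold x in Hx, Ex.
  set (k := x - c).
  assert (Hk0 : k <> 0).
  { intro E. unfold k in E. assert (x = c) by lra. rewrite H0 in Ex. lra. }
  assert (Hk : Rabs k < d1).
  { unfold k, x, c. apply (Hd2' (y0 + h)). split. split. exact I. intro E; apply Hh0; lra. simpl; unfold R_dist.
    replace (y0 + h - y0) with h by ring. auto. }
  pose proof (Hd1 k Hk0 Hk) as Q.
  fold c in Q. replace (c + k) with x in Q by (unfold k; ring). rewrite Ex, Ec in Q.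
  replace (y0 + h - y0) with h in Q by ring.
  replace (k / h) with (/ (h / k)) by (field; split; auto).
  apply inv_close; auto.
Qed.

Lemma forward g : Hg g ->
  (forall a, 0 < a < 1 -> ex_derive g a /\ continuous (Derive g) a /\ Derive g a <> 0) ->
  J_differentiable_on_S g.
Proof.
  intros HG HD a b Ha Hb.
  set (y0 := g a - g b).
  destruct (ginv_spec g HG y0) as [Hc Ec].
  destruct (HD _ Hc) as [Ex [_ Dn]].
  pose proof (Derive_correct _ _ Ex) as Dc.
  apply is_derive_Reals in Dc.
  pose proof (ginv_deriv g y0 _ HG Dc Dn) as Di.
  apply is_derive_Reals in Di.
  destruct (HD _ Ha) as [Exa _]. destruct (HD _ Hb) as [Exb _].
  pose proof (Derive_correct _ _ Exa) as Da. pose proof (Derive_correct _ _ Exb) as Db.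
  assert (F1 : filterdiff (fun p : R * R => g (fst p)) (locally (a, b))
                 (fun p => scal (fst p) (Derive g a))).
  { exact (filterdiff_comp' (U := prod_NormedModule R_AbsRing R_NormedModule R_NormedModule)
       (fun p => fst p) g (a,b) (fun p => fst p) (fun y => scal y (Derive g a))
       (filterdiff_linear _ (is_linear_fst (U := R_NormedModule) (V:=R_NormedModule))) Da). }
  assert (F2 : filterdiff (fun p : R * R => g (snd p)) (locally (a, b))
                 (fun p => scal (snd p) (Derive g b))).
  { exact (filterdiff_comp' (U := prod_NormedModule R_AbsRing R_NormedModule R_NormedModule)
       (fun p => snd p) g (a,b) (fun p => snd p) (fun y => scal y (Derive g b))
       (filterdiff_linear _ (is_linear_snd (U := R_NormedModule) (V:=R_NormedModule))) Db). }
  pose proof (filterdiff_minus_fct _ _ _ _ F1 F2) as F3.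
  pose proof (filterdiff_comp' _ (ginv g) (a, b) _ _ F3 Di) as F4.
  eexists. exact F4.
Qed.


Definition Gf (g : R -> R) (t : R) := g (1/2 + t).
Definition Dq (g : R -> R) (b h : R) := (Jfun g (b + h) b - 1/2) / h.
Definition lam (g : R -> R) (b : R) := Derive (fun x => Jfun g x b) b.

Lemma g_J g : Hg g -> forall x b, g (Jfun g x b) = g x - g b.
Proof. intros HG x b. apply (ginv_spec g HG). Qed.

Lemma J_range g : Hg g -> forall x b, 0 < Jfun g x b < 1.
Proof. intros HG x b. apply (ginv_spec g HG). Qed.

Lemma ginv_half g : Hg g -> ginv g 0 = 1/2.
Proof. intros HG. rewrite <- (g_half g HG). apply ginv_g; auto; lra. Qed.

Lemma J_diag g : Hg g -> forall b, Jfun g b b = 1/2.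
Proof. intros HG b. unfold Jfun. replace (g b - g b) with 0 by ring. apply ginv_half; auto. Qed.

Lemma J_inv g : Hg g -> forall x b, 0 < x < 1 -> 0 < b < 1 -> Jfun g (Jfun g x b) (1 - b) = x.
Proof.
  intros HG x b Hx Hb. unfold Jfun at 1. rewrite (g_J g HG).
  destruct HG as (A&B&C&D). rewrite C by auto.
  replace (g x - g b - - g b) with (g x) by ring. apply ginv_g; auto. split; auto.
Qed.

Lemma locally_01 (P : R -> Prop) b : 0 < b < 1 -> (forall y, 0 < y < 1 -> P y) -> locally b P.
Proof.
  intros Hb HP. assert (0 < Rmin b (1-b)) by (apply Rmin_glb_lt; lra).
  exists (mkposreal _ H). intros y Hy. apply HP.
  unfold ball in Hy; simpl in Hy; unfold AbsRing_ball, minus, plus, opp in Hy; simpl in Hy.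
  apply Rabs_def2 in Hy. pose proof (Rmin_l b (1-b)). pose proof (Rmin_r b (1-b)). lra.
Qed.

Lemma partial_ex g : J_differentiable_on_S g -> forall a b, 0 < a < 1 -> 0 < b < 1 ->
  ex_derive (fun x => Jfun g x b) a.
Proof.
  intros HJ a b Ha Hb. apply ex_derive_filterdiff.
  apply (ex_filterdiff_comp'_2 (fun x : R => x) (fun _ : R => b) (fun x y => Jfun g x y) a).
  apply ex_filterdiff_id. apply ex_filterdiff_const. apply HJ; auto.
Qed.

Lemma lam_nonneg g : Hg g -> J_differentiable_on_S g -> forall b, 0 < b < 1 -> 0 <= lam g b.
Proof.
  intros HG HJ b Hb. pose proof (Derive_correct _ _ (partial_ex g HJ b b Hb Hb)) as D.
  apply is_derive_Reals in D. change (derivable_pt_lim (fun x => Jfun g x b) b (lam g b)) in D.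
  destruct (Rle_or_lt 0 (lam g b)) as [|Hn]; auto. exfalso.
  destruct (D (- lam g b) ltac:(lra)) as [d Hd].
  set (h := Rmin (d/2) ((1-b)/2)).
  assert (Hd0 := cond_pos d).
  assert (0 < h) by (unfold h; apply Rmin_glb_lt; lra).
  assert (h <= d/2) by apply Rmin_l. assert (h <= (1-b)/2) by apply Rmin_r.
  assert (Hh : Rabs h < d) by (rewrite Rabs_right; lra).
  specialize (Hd h ltac:(lra) Hh).
  rewrite (J_diag g HG) in Hd.
  assert (HJJ : Jfun g b b < Jfun g (b+h) b).
  { unfold Jfun. apply ginv_lt; auto. assert (g b < g (b+h)) by (apply (g_lt_iff g HG); lra). lra. }
  rewrite (J_diag g HG) in HJJ.
  assert (0 < (Jfun g (b + h) b - 1/2) / h) by (apply Rdiv_lt_0_compat; lra).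
  apply Rabs_def2 in Hd. lra.
Qed.

Lemma lam_pos g : Hg g -> J_differentiable_on_S g -> forall b, 0 < b < 1 -> 0 < lam g b.
Proof.
  intros HG HJ b Hb. destruct (lam_nonneg g HG HJ b Hb) as [|E]; auto. exfalso.
  pose proof (Derive_correct _ _ (partial_ex g HJ b b Hb Hb)) as D. change (is_derive (fun x => Jfun g x b) b (lam g b)) in D.
  assert (Hh : 0 < Jfun g b b < 1) by (rewrite (J_diag g HG); lra).
  assert (H1b : 0 < 1 - b < 1) by lra.
  pose proof (Derive_correct _ _ (partial_ex g HJ _ (1-b) Hh H1b)) as D2.
  pose proof (is_derive_comp (fun y => Jfun g y (1-b)) (fun x => Jfun g x b) b _ _ D2 D) as C.
  assert (C2 : is_derive (fun x : R => x) b (scal (lam g b) (Derive (fun x => Jfun g x (1-b)) (Jfun g b b)))).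
  { apply (is_derive_ext_loc (fun x0 => Jfun g (Jfun g x0 b) (1 - b))); auto.
    apply locally_01; auto. intros y Hy. apply J_inv; auto. }
  apply is_derive_unique in C2. rewrite Derive_id in C2. rewrite <- E in C2.
  unfold scal in C2; simpl in C2; unfold mult in C2; simpl in C2. lra.
Qed.

Lemma Dq_lim g : Hg g -> J_differentiable_on_S g -> forall b, 0 < b < 1 ->
  forall eps, 0 < eps -> exists del, 0 < del /\ forall h, 0 < h < del -> Rabs (Dq g b h - lam g b) < eps.
Proof.
  intros HG HJ b Hb eps He.
  pose proof (Derive_correct _ _ (partial_ex g HJ b b Hb Hb)) as D.
  apply is_derive_Reals in D. change (derivable_pt_lim (fun x => Jfun g x b) b (lam g b)) in D.
  destruct (D eps He) as [d Hd]. exists d. split. apply cond_pos.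
  intros h Hh. specialize (Hd h ltac:(lra) ltac:(rewrite Rabs_right; lra)).
  rewrite (J_diag g HG) in Hd. exact Hd.
Qed.

Lemma Gf_pos g : Hg g -> forall t, 0 < t < 1/2 -> 0 < Gf g t.
Proof.
  intros HG t Ht. unfold Gf. rewrite <- (g_half g HG). apply (g_lt_iff g HG); lra.
Qed.

Lemma ginv_Gf g : Hg g -> forall t, -1/2 < t < 1/2 -> ginv g (Gf g t) = 1/2 + t.
Proof. intros HG t Ht. unfold Gf. apply ginv_g; auto; lra. Qed.

Lemma shift g : Hg g -> forall x t, 0 < x < 1 -> 0 < t < 1/2 ->
  0 < ginv g (g x + Gf g t) - x /\
  Dq g x (ginv g (g x + Gf g t) - x) * (ginv g (g x + Gf g t) - x) = t /\
  g (x + (ginv g (g x + Gf g t) - x)) - g x = Gf g t.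
Proof.
  intros HG x t Hx Ht.
  destruct (ginv_spec g HG (g x + Gf g t)) as [Hy Ey].
  set (y := ginv g (g x + Gf g t)) in *.
  pose proof (Gf_pos g HG t Ht).
  assert (x < y).
  { rewrite <- (ginv_g g HG x Hx). unfold y. apply ginv_lt; auto. lra. }
  replace (x + (y - x)) with y by ring.
  split; [lra|split; [|lra]].
  unfold Dq. replace (x + (y - x)) with y by ring.
  unfold Jfun. replace (g y - g x) with (Gf g t) by lra.
  rewrite ginv_Gf; auto; try lra. field. lra.
Qed.

Lemma shift_small g : Hg g -> forall x, 0 < x < 1 -> forall del, 0 < del ->
  exists eta, 0 < eta /\ forall t, 0 < t < eta -> ginv g (g x + Gf g t) - x < del.
Proof.
  intros HG x Hx del Hd.
  destruct (ginv_cpt g HG (g x) del Hd) as [al [Hal Hal']].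
  destruct (g_cpt g HG (1/2) ltac:(lra) al Hal) as [be [Hbe Hbe']].
  exists (Rmin be (1/2)). split. apply Rmin_glb_lt; lra.
  intros t Ht. pose proof (Rmin_l be (1/2)). pose proof (Rmin_r be (1/2)).
  assert (HG1 : 0 < Gf g t) by (apply Gf_pos; auto; lra).
  assert (A : Rabs (g (1/2 + t) - g (1/2)) < al).
  { apply (Hbe' (1/2 + t)). split. split. exact I. lra.
    simpl; unfold R_dist. rewrite Rabs_right; lra. }
  rewrite (g_half g HG) in A.
  assert (B : Rabs (ginv g (g x + Gf g t) - ginv g (g x)) < del).
  { apply (Hal' (g x + Gf g t)). split. split. exact I. lra.
    simpl; unfold R_dist. replace (g x + Gf g t - g x) with (Gf g t) by ring. 
    unfold Gf. replace (g (1/2+t) - 0) with (g (1/2+t)) in A by ring. exact A. }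
  rewrite ginv_g in B; auto. apply Rabs_def2 in B. lra.
Qed.


Lemma dini (phi : R -> R) p q : p < q ->
  (forall x, p <= x <= q -> continuity_pt phi x) ->
  (forall x, p <= x < q -> forall del, 0 < del -> exists h, 0 < h < del /\ phi x <= phi (x + h)) ->
  phi p <= phi q.
Proof.
  intros Hpq Hc Hs.
  set (E := fun x => p <= x <= q /\ phi p <= phi x).
  assert (Hb : bound E) by (exists q; intros x [Hx _]; lra).
  assert (He : exists x, E x) by (exists p; split; lra).
  destruct (completeness E Hb He) as [m [Hm1 Hm2]].
  assert (Hpm : p <= m) by (apply Hm1; split; lra).
  assert (Hmq : m <= q) by (apply Hm2; intros x [Hx _]; lra).
  assert (Em : phi p <= phi m).
  { destruct (Rle_or_lt (phi p) (phi m)) as [|Hlt]; auto. exfalso.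
    destruct (Hc m (conj Hpm Hmq) (phi p - phi m) ltac:(lra)) as [al [Hal Hal']].
    assert (exists x, E x /\ m - al < x).
    { apply NNPP. intro N. assert (m <= m - al). apply Hm2. intros x Ex.
      destruct (Rle_or_lt x (m - al)); auto. exfalso; apply N; eauto. lra. }
    destruct H as [x [[Hx Ex] Hx2]].
    assert (x <= m) by (apply Hm1; split; auto).
    destruct (Req_dec x m) as [->|Hne]; [lra|].
    specialize (Hal' x). simpl in Hal'. unfold R_dist in Hal'.
    assert (Rabs (phi x - phi m) < phi p - phi m).
    { apply Hal'. split. split. exact I. auto. rewrite Rabs_left; lra. }
    apply Rabs_def2 in H0. lra. }
  destruct (Req_dec m q) as [<-|Hne]; auto.
  destruct (Hs m ltac:(lra) (q - m) ltac:(lra)) as [h [Hh Hh2]].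
  assert (m + h <= m) by (apply Hm1; split; lra). lra.
Qed.


Lemma up_lem g : Hg g -> forall p q r0 mu c, 0 < p -> p < q -> q < 1 -> 0 < r0 -> 0 < c ->
  (forall b, p <= b <= q -> forall h, 0 < h <= r0 -> mu <= Dq g b h) ->
  (forall del, 0 < del -> exists t, 0 < t < del /\ c * t <= Gf g t) ->
  c * mu * (q - p) <= g q - g p.
Proof.
  intros HG p q r0 mu c Hp Hpq Hq Hr Hc Hmu Hfr.
  cut ((fun x => g x - c * mu * x) p <= (fun x => g x - c * mu * x) q). simpl. lra.
  apply dini; auto.
  - intros x Hx. apply continuity_pt_minus. apply g_cpt; auto; lra.
    apply continuity_pt_mult. apply continuity_pt_const; intros u v; auto. apply continuity_pt_id.
  - intros x Hx del Hdel.
    destruct (shift_small g HG x ltac:(lra) (Rmin del r0) ltac:(apply Rmin_glb_lt; lra)) as [eta [Heta Heta']].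
    destruct (Hfr (Rmin eta (1/2)) ltac:(apply Rmin_glb_lt; lra)) as [t [Ht Ht2]].
    pose proof (Rmin_l eta (1/2)). pose proof (Rmin_r eta (1/2)).
    pose proof (Rmin_l del r0). pose proof (Rmin_r del r0).
    destruct (shift g HG x t ltac:(lra) ltac:(lra)) as [K1 [K2 K3]].
    set (h := ginv g (g x + Gf g t) - x) in *.
    assert (h < Rmin del r0) by (apply Heta'; lra).
    exists h. split. lra.
    assert (mu <= Dq g x h) by (apply Hmu; lra).
    assert (mu * h <= t) by (rewrite <- K2; apply Rmult_le_compat_r; lra).
    assert (c * (mu * h) <= c * t) by (apply Rmult_le_compat_l; lra).
    lra.
Qed.

Lemma down_lem g : Hg g -> forall p q r0 nu c, 0 < p -> p < q -> q < 1 -> 0 < r0 -> 0 < c ->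
  (forall b, p <= b <= q -> forall h, 0 < h <= r0 -> Dq g b h <= nu) ->
  (forall del, 0 < del -> exists t, 0 < t < del /\ Gf g t <= c * t) ->
  g q - g p <= c * nu * (q - p).
Proof.
  intros HG p q r0 nu c Hp Hpq Hq Hr Hc Hnu Hfr.
  cut ((fun x => c * nu * x - g x) p <= (fun x => c * nu * x - g x) q). simpl. lra.
  apply dini; auto.
  - intros x Hx. apply continuity_pt_minus.
    apply continuity_pt_mult. apply continuity_pt_const; intros u v; auto. apply continuity_pt_id.
    apply g_cpt; auto; lra.
  - intros x Hx del Hdel.
    destruct (shift_small g HG x ltac:(lra) (Rmin del r0) ltac:(apply Rmin_glb_lt; lra)) as [eta [Heta Heta']].
    destruct (Hfr (Rmin eta (1/2)) ltac:(apply Rmin_glb_lt; lra)) as [t [Ht Ht2]].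
    pose proof (Rmin_l eta (1/2)). pose proof (Rmin_r eta (1/2)).
    pose proof (Rmin_l del r0). pose proof (Rmin_r del r0).
    destruct (shift g HG x t ltac:(lra) ltac:(lra)) as [K1 [K2 K3]].
    set (h := ginv g (g x + Gf g t) - x) in *.
    assert (h < Rmin del r0) by (apply Heta'; lra).
    exists h. split. lra.
    assert (Dq g x h <= nu) by (apply Hnu; lra).
    assert (t <= nu * h) by (rewrite <- K2; apply Rmult_le_compat_r; lra).
    assert (c * t <= c * (nu * h)) by (apply Rmult_le_compat_l; lra).
    lra.
Qed.


Definition nxt (F : nat -> R -> Prop) (n : nat) (pq : R * R) : R * R :=
  epsilon (inhabits (0,0)) (fun r => fst pq <= fst r < snd r /\ snd r <= snd pq /\
                                     forall y, fst r <= y <= snd r -> ~ F n y).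

Fixpoint seqI (F : nat -> R -> Prop) (a b : R) (n : nat) : R * R :=
  match n with O => (a, b) | S m => nxt F m (seqI F a b m) end.

Lemma open_compl (F : R -> Prop) x :
  (forall x, (forall e, 0 < e -> exists y, Rabs (y - x) < e /\ F y) -> F x) ->
  ~ F x -> exists e, 0 < e /\ forall y, Rabs (y - x) < e -> ~ F y.
Proof.
  intros Hcl Hx. apply NNPP. intro N. apply Hx. apply Hcl. intros e He.
  apply NNPP. intro N2. apply N. exists e. split; auto. intros y Hy Fy. apply N2. eauto.
Qed.

Lemma baire (F : nat -> R -> Prop) a b : a < b ->
  (forall n x, (forall e, 0 < e -> exists y, Rabs (y - x) < e /\ F n y) -> F n x) ->
  (forall x, a <= x <= b -> exists n, F n x) ->
  exists n p q, a <= p /\ p < q /\ q <= b /\ forall x, p <= x <= q -> F n x.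
Proof.
  intros Hab Hcl Hcov. apply NNPP. intro N.
  assert (Hneg : forall n p q, a <= p -> p < q -> q <= b -> exists x, p <= x <= q /\ ~ F n x).
  { intros n p q H1 H2 H3. apply NNPP. intro N2. apply N. exists n, p, q.
    repeat split; auto. intros x Hx. apply NNPP. intro N3. apply N2. eauto. }
  assert (Hstep : forall n pq, a <= fst pq -> fst pq < snd pq -> snd pq <= b ->
     exists r, fst pq <= fst r < snd r /\ snd r <= snd pq /\ forall y, fst r <= y <= snd r -> ~ F n y).
  { intros n [p q] H1 H2 H3; simpl in *.
    destruct (Hneg n p q H1 H2 H3) as [x [Hx Fx]].
    destruct (open_compl (F n) x (Hcl n) Fx) as [e [He He']].
    exists (Rmax p (x - e/2), Rmin q (x + e/2)). simpl.
    pose proof (Rmax_l p (x - e/2)). pose proof (Rmax_r p (x - e/2)).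
    pose proof (Rmin_l q (x + e/2)). pose proof (Rmin_r q (x + e/2)).
    assert (Rmax p (x - e/2) <= x) by (apply Rmax_lub; lra).
    assert (x <= Rmin q (x + e/2)) by (apply Rmin_glb; lra).
    split; [split; [lra|]|split; [lra|]].
    - destruct (Req_dec (Rmax p (x - e/2)) x) as [E|E].
      + assert (p = x) by (unfold Rmax in E; destruct (Rle_dec p (x - e/2)); lra).
        assert (x < Rmin q (x + e/2)) by (apply Rmin_glb_lt; lra).
        lra.
      + lra.
    - intros y Hy. apply He'. apply Rabs_def1; lra. }
  set (I := seqI F a b).
  assert (Hinv : forall n, a <= fst (I n) /\ fst (I n) < snd (I n) /\ snd (I n) <= b /\
     fst (I n) <= fst (I (S n)) /\ snd (I (S n)) <= snd (I n) /\ fst (I (S n)) < snd (I (S n)) /\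
     forall y, fst (I (S n)) <= y <= snd (I (S n)) -> ~ F n y).
  assert (Hnx : forall n pq, a <= fst pq -> fst pq < snd pq -> snd pq <= b ->
     fst pq <= fst (nxt F n pq) < snd (nxt F n pq) /\ snd (nxt F n pq) <= snd pq /\
     forall y, fst (nxt F n pq) <= y <= snd (nxt F n pq) -> ~ F n y).
  { intros n pq H1 H2 H3. unfold nxt. apply epsilon_spec. apply Hstep; auto. }
  assert (HS : forall n, I (S n) = nxt F n (I n)) by reflexivity.
  { induction n as [|n IH].
    - rewrite HS. assert (I 0%nat = (a,b)) as -> by reflexivity.
      destruct (Hnx 0%nat (a,b) ltac:(simpl; lra) ltac:(simpl; lra) ltac:(simpl; lra)) as [A [B C]].
      simpl fst in *; simpl snd in *. repeat split; try lra; auto.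
    - destruct IH as (A1&A2&A3&A4&A5&A6&A7).
      assert (B1 : a <= fst (I (S n))) by lra. assert (B3 : snd (I (S n)) <= b) by lra.
      destruct (Hnx (S n) (I (S n)) B1 A6 B3) as [C1 [C2 C3]].
      rewrite <- HS in C1, C2, C3.
      repeat split; try lra; auto. }
  assert (Hmono : forall n k : nat, fst (I n) <= fst (I (n + k)%nat) /\ snd (I (n + k)%nat) <= snd (I n)).
  { intros n k. induction k. rewrite Nat.add_0_r; lra.
    rewrite Nat.add_succ_r. destruct (Hinv (n + k)%nat) as (_&_&_&A4&A5&_). lra. }
  assert (Hlt : forall m n, fst (I m) < snd (I n)).
  { intros m n. destruct (Nat.le_ge_cases m n) as [H|H].
    - destruct (Hmono m (n - m)%nat) as [A _]. replace (m + (n - m))%nat with n in A by lia.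
      destruct (Hinv n) as (_&B&_). lra.
    - destruct (Hmono n (m - n)%nat) as [_ A]. replace (n + (m - n))%nat with m in A by lia.
      destruct (Hinv m) as (_&B&_). lra. }
  set (E := fun x => exists n, x = fst (I n)).
  assert (HbE : bound E) by (exists b; intros x [n ->]; destruct (Hinv n) as (_&_&B&_); pose proof (Hlt n n); lra).
  assert (HeE : exists x, E x) by (exists (fst (I 0%nat)); exists 0%nat; auto).
  destruct (completeness E HbE HeE) as [x [Hx1 Hx2]].
  assert (Hlo : forall n, fst (I n) <= x) by (intros n; apply Hx1; exists n; auto).
  assert (Hhi : forall n, x <= snd (I n)) by (intros n; apply Hx2; intros y [m ->]; left; apply Hlt).
  assert (a <= x) by (destruct (Hinv 0%nat) as (A&_); specialize (Hlo 0%nat); lra).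
  assert (x <= b) by (destruct (Hinv 0%nat) as (_&_&A&_); specialize (Hhi 0%nat); lra).
  destruct (Hcov x ltac:(lra)) as [n Fn].
  destruct (Hinv n) as (_&_&_&_&_&_&A7). apply (A7 x); auto.
Qed.


Lemma Dq_cont g : Hg g -> forall b h, 0 < b < 1 -> 0 < b + h < 1 ->
  continuity_pt (fun b => Dq g b h) b.
Proof.
  intros HG b h Hb Hbh. unfold Dq, Jfun.
  change (continuity_pt (mult_fct (fun y => ginv g (g (y + h) - g y) - 1/2) (fct_cte (/ h))) b).
  apply continuity_pt_mult; [|apply continuity_pt_const; intros u v; auto].
  change (continuity_pt (minus_fct (fun y => ginv g (g (y + h) - g y)) (fct_cte (1/2))) b).
  apply continuity_pt_minus; [|apply continuity_pt_const; intros u v; auto].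
  change (continuity_pt (comp (ginv g) (fun y => g (y + h) - g y)) b).
  apply continuity_pt_comp; [|apply ginv_cpt; auto].
  change (continuity_pt (minus_fct (fun y => g (y + h)) g) b).
  apply continuity_pt_minus; [|apply g_cpt; auto].
  change (continuity_pt (comp g (plus_fct id (fct_cte h))) b).
  apply continuity_pt_comp. apply continuity_pt_plus. apply continuity_pt_id.
  apply continuity_pt_const; intros u v; auto.
  apply g_cpt; auto.
Qed.

Lemma IZR_split z : IZR z = INR (Z.to_nat z) - INR (Z.to_nat (- z)).
Proof.
  rewrite !INR_IZR_INZ.
  destruct z; simpl; try lra.
  - rewrite positive_nat_Z. lra.
  - rewrite positive_nat_Z. rewrite <- Pos2Z.opp_pos. rewrite opp_IZR. lra.
Qed.

Lemma exp_le x y : x <= y -> exp x <= exp y.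
Proof. intros [H|H]. left; apply exp_increasing; auto. rewrite H; lra. Qed.

Lemma cpt_eps f b : continuity_pt f b -> forall eps, 0 < eps ->
  exists al, 0 < al /\ forall y, Rabs (y - b) < al -> Rabs (f y - f b) < eps.
Proof.
  intros Hc eps He. destruct (Hc eps He) as [al [Hal H]]. exists al. split; auto.
  intros y Hy. destruct (Req_dec y b) as [->|Hne].
  - rewrite Rminus_diag, Rabs_R0; auto.
  - apply (H y). split. split. exact I. auto. exact Hy.
Qed.

Definition ie (m : nat) : R :=
  INR (fst (Cantor.of_nat (fst (Cantor.of_nat m)))) - INR (snd (Cantor.of_nat (fst (Cantor.of_nat m)))).
Definition inn (m : nat) : nat := snd (Cantor.of_nat m).
Definition FF g th m b := 1/4 <= b <= 3/4 /\ forall h, 0 < h <= / (INR (inn m) + 8) ->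
   exp ((ie m - 2) * th) <= Dq g b h <= exp ((ie m + 1) * th).

Lemma r0_bound n : 0 < / (INR n + 8) <= 1/8.
Proof.
  pose proof (pos_INR n). split. apply Rinv_0_lt_compat; lra.
  unfold Rdiv. rewrite Rmult_1_l. apply Rinv_le_contravar; lra.
Qed.

Lemma FF_closed g th : Hg g -> forall m b, (forall e, 0 < e -> exists y, Rabs (y - b) < e /\ FF g th m y) -> FF g th m b.
Proof.
  intros HG m b Hb.
  assert (B1 : 1/4 <= b).
  { destruct (Rle_or_lt (1/4) b) as [|H]; auto. destruct (Hb (1/4 - b) ltac:(lra)) as [y [Hy [[Hy1 _] _]]].
    apply Rabs_def2 in Hy. lra. }
  assert (B2 : b <= 3/4).
  { destruct (Rle_or_lt b (3/4)) as [|H]; auto. destruct (Hb (b - 3/4) ltac:(lra)) as [y [Hy [[_ Hy1] _]]].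
    apply Rabs_def2 in Hy. lra. }
  split; [lra|]. intros h Hh. pose proof (r0_bound (inn m)).
  pose proof (Dq_cont g HG b h ltac:(lra) ltac:(lra)) as Hc.
  split.
  - destruct (Rle_or_lt (exp ((ie m - 2) * th)) (Dq g b h)) as [|Hlt]; auto. exfalso.
    destruct (cpt_eps _ _ Hc _ (Rlt_Rminus _ _ Hlt)) as [al [Hal Hal']].
    destruct (Hb al Hal) as [y [Hy [_ Fy]]]. specialize (Fy h Hh). specialize (Hal' y Hy).
    apply Rabs_def2 in Hal'. lra.
  - destruct (Rle_or_lt (Dq g b h) (exp ((ie m + 1) * th))) as [|Hlt]; auto. exfalso.
    destruct (cpt_eps _ _ Hc _ (Rlt_Rminus _ _ Hlt)) as [al [Hal Hal']].
    destruct (Hb al Hal) as [y [Hy [_ Fy]]]. specialize (Fy h Hh). specialize (Hal' y Hy).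
    apply Rabs_def2 in Hal'. lra.
Qed.

Lemma FF_cover g th : Hg g -> J_differentiable_on_S g -> 0 < th ->
  forall b, 1/4 <= b <= 3/4 -> exists m, FF g th m b.
Proof.
  intros HG HJ Hth b Hb.
  set (la := lam g b). assert (Hla : 0 < la) by (apply lam_pos; auto; lra).
  set (j := up (ln la / th)).
  destruct (archimed (ln la / th)) as [A1 A2]. fold j in A1, A2.
  assert (E1 : (IZR j - 1) * th <= ln la).
  { assert (IZR j - 1 <= ln la / th) by lra.
    apply (Rmult_le_compat_r th) in H; [|lra]. unfold Rdiv in H. rewrite Rmult_assoc, Rinv_l in H by lra. lra. }
  assert (E2 : ln la < IZR j * th).
  { apply (Rmult_lt_compat_r th) in A1; [|lra]. unfold Rdiv in A1. rewrite Rmult_assoc, Rinv_l in A1 by lra. lra. }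
  assert (X1 : exp (- th) < 1) by (rewrite <- exp_0; apply exp_increasing; lra).
  assert (X2 : 1 < exp th) by (rewrite <- exp_0; apply exp_increasing; lra).
  set (eps := Rmin (la - la * exp (- th)) (la * exp th - la)).
  assert (He : 0 < eps) by (unfold eps; apply Rmin_glb_lt; nra).
  destruct (Dq_lim g HG HJ b ltac:(lra) eps He) as [del [Hdel Hdel']].
  destruct (archimed_cor1 del Hdel) as [N [HN HN0]].
  set (p1 := Z.to_nat j). set (p2 := Z.to_nat (- j)).
  exists (Cantor.to_nat (Cantor.to_nat (p1, p2), N)).
  assert (Hie : ie (Cantor.to_nat (Cantor.to_nat (p1, p2), N)) = IZR j).
  { unfold ie. rewrite Cantor.cancel_of_to. change (fst (Cantor.to_nat (p1, p2), N)) with (Cantor.to_nat (p1, p2)).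
    rewrite Cantor.cancel_of_to. change (INR p1 - INR p2 = IZR j). rewrite (IZR_split j). reflexivity. }
  assert (Hin : inn (Cantor.to_nat (Cantor.to_nat (p1, p2), N)) = N).
  { unfold inn. rewrite Cantor.cancel_of_to. reflexivity. }
  split; auto. rewrite Hie, Hin. intros h Hh.
  assert (0 < INR N) by (apply lt_0_INR; auto).
  assert (/ (INR N + 8) < / INR N) by (apply Rinv_lt_contravar; nra).
  specialize (Hdel' h ltac:(lra)). apply Rabs_def2 in Hdel'.
  pose proof (Rmin_l (la - la * exp (- th)) (la * exp th - la)).
  pose proof (Rmin_r (la - la * exp (- th)) (la * exp th - la)).
  fold la in Hdel'. fold eps in H1, H2.
  split.
  - apply Rle_trans with (la * exp (- th)); [|lra].
    rewrite <- (exp_ln la) at 1 by auto. rewrite <- exp_plus. apply exp_le. lra.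
  - apply Rle_trans with (la * exp th); [lra|].
    rewrite <- (exp_ln la) at 1 by auto. rewrite <- exp_plus. apply exp_le. lra.
Qed.


Lemma not_ev_freq (P : R -> Prop) :
  ~ (exists del, 0 < del /\ forall t, 0 < t < del -> P t) ->
  forall del, 0 < del -> exists t, 0 < t < del /\ ~ P t.
Proof.
  intros N del Hd. apply NNPP. intro N2. apply N. exists del. split; auto.
  intros t Ht. apply NNPP. intro N3. apply N2. eauto.
Qed.

Lemma window g : Hg g -> J_differentiable_on_S g -> forall th, 0 < th ->
  exists w, 0 < w /\ forall eta, 0 < eta -> exists del, 0 < del /\
    forall t, 0 < t < del -> w - eta < Gf g t / t < w * exp (3 * th) + eta.
Proof.
  intros HG HJ th Hth.
  destruct (baire (fun m b => FF g th m b) (1/4) (3/4) ltac:(lra)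
     (fun m b H => FF_closed g th HG m b H) (FF_cover g th HG HJ Hth)) as [m [p [q [Hp [Hpq [Hq Hall]]]]]].
  set (mu := exp ((ie m - 2) * th)). set (nu := exp ((ie m + 1) * th)).
  set (r0 := / (INR (inn m) + 8)). pose proof (r0_bound (inn m)) as Hr0. fold r0 in Hr0.
  assert (Hmu : 0 < mu) by apply exp_pos. assert (Hnu : 0 < nu) by apply exp_pos.
  assert (Hnumu : nu = mu * exp (3 * th)) by (unfold nu, mu; rewrite <- exp_plus; f_equal; ring).
  assert (Hlo : forall b, p <= b <= q -> forall h, 0 < h <= r0 -> mu <= Dq g b h)
    by (intros b Hb h Hh; apply (Hall b Hb); auto).
  assert (Hhi : forall b, p <= b <= q -> forall h, 0 < h <= r0 -> Dq g b h <= nu)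
    by (intros b Hb h Hh; apply (Hall b Hb); auto).
  set (s := (g q - g p) / (q - p)).
  assert (Hgpq : g p < g q) by (apply (g_lt_iff g HG); lra).
  assert (Hs : 0 < s) by (apply Rdiv_lt_0_compat; lra).
  assert (Hsq : s * (q - p) = g q - g p) by (unfold s; field; lra).
  exists (s / nu). split. apply Rdiv_lt_0_compat; auto.
  intros eta Heta.
  set (chi := s / mu + eta).
  assert (U : exists del, 0 < del /\ forall t, 0 < t < del -> Gf g t < chi * t).
  { apply NNPP. intro N. pose proof (not_ev_freq _ N) as F.
    assert (Hc : 0 < chi) by (unfold chi; assert (0 < s / mu) by (apply Rdiv_lt_0_compat; auto); lra).
    assert (chi * mu * (q - p) <= g q - g p).
    { apply (up_lem g HG p q r0 mu chi); try lra; auto.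
      intros del Hd. destruct (F del Hd) as [t [Ht Nt]]. exists t. split; auto. lra. }
    rewrite <- Hsq in H. assert (chi * mu <= s) by (apply (Rmult_le_reg_r (q - p)); lra).
    unfold chi in H0. rewrite Rmult_plus_distr_r in H0.
    replace (s / mu * mu) with s in H0 by (field; lra).
    assert (0 < eta * mu) by (apply Rmult_lt_0_compat; lra). lra. }
  set (clo := Rmax (s / nu - eta) (s / nu / 2)).
  assert (Hclo : 0 < clo) by (unfold clo; eapply Rlt_le_trans; [|apply Rmax_r];
                              assert (0 < s / nu) by (apply Rdiv_lt_0_compat; auto); lra).
  assert (Hclo2 : clo < s / nu) by (unfold clo; apply Rmax_lub_lt;
                              assert (0 < s / nu) by (apply Rdiv_lt_0_compat; auto); lra).
  assert (L : exists del, 0 < del /\ forall t, 0 < t < del -> clo * t < Gf g t).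
  { apply NNPP. intro N. pose proof (not_ev_freq _ N) as F.
    assert (g q - g p <= clo * nu * (q - p)).
    { apply (down_lem g HG p q r0 nu clo); try lra; auto.
      intros del Hd. destruct (F del Hd) as [t [Ht Nt]]. exists t. split; auto. lra. }
    rewrite <- Hsq in H. assert (s <= clo * nu) by (apply (Rmult_le_reg_r (q - p)); lra).
    assert (clo * nu < s / nu * nu) by (apply Rmult_lt_compat_r; auto).
    replace (s / nu * nu) with s in H1 by (field; lra). lra. }
  destruct U as [d1 [Hd1 U]]. destruct L as [d2 [Hd2 L]].
  exists (Rmin d1 d2). split. apply Rmin_glb_lt; auto.
  intros t Ht. pose proof (Rmin_l d1 d2). pose proof (Rmin_r d1 d2).
  specialize (U t ltac:(lra)). specialize (L t ltac:(lra)).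
  assert (Hsm : s / mu = s / nu * exp (3 * th)) by (rewrite Hnumu; field; split; [apply Rgt_not_eq, exp_pos|lra]).
  assert (s / nu - eta <= clo) by apply Rmax_l.
  split.
  - apply Rle_lt_trans with clo. lra. apply (Rmult_lt_reg_r t); [lra|]. unfold Rdiv. rewrite Rmult_assoc, Rinv_l by lra. lra.
  - apply (Rmult_lt_reg_r t); [lra|]. unfold Rdiv at 1. rewrite Rmult_assoc, Rinv_l by lra.
    rewrite Rmult_1_r. fold chi in U. unfold chi in U. rewrite Hsm in U. lra.
Qed.


Lemma cauchyQ g : Hg g -> J_differentiable_on_S g -> forall eps, 0 < eps ->
  exists del, 0 < del /\ forall t t', 0 < t < del -> 0 < t' < del -> Rabs (Gf g t / t - Gf g t' / t') < eps.
Proof.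
  intros HG HJ eps He.
  destruct (window g HG HJ 1 ltac:(lra)) as [w1 [Hw1 W1]].
  destruct (W1 1 ltac:(lra)) as [d1 [Hd1 B1]].
  set (M := w1 * exp (3 * 1) + 1).
  assert (HM : 0 < M) by (unfold M; pose proof (exp_pos (3*1)); nra).
  set (ka := eps / (4 * (M + 1))).
  assert (Hka : 0 < ka) by (unfold ka; apply Rdiv_lt_0_compat; lra).
  set (th := ln (1 + ka) / 3).
  assert (Hth : 0 < th) by (unfold th; apply Rdiv_lt_0_compat; [rewrite <- ln_1; apply ln_increasing|]; lra).
  assert (E3 : exp (3 * th) = 1 + ka) by (unfold th; replace (3 * (ln (1 + ka) / 3)) with (ln (1 + ka)) by field; apply exp_ln; lra).
  destruct (window g HG HJ th Hth) as [w [Hw W]].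
  set (eta := Rmin (eps / 8) 1).
  assert (Heta : 0 < eta) by (unfold eta; apply Rmin_glb_lt; lra).
  pose proof (Rmin_l (eps/8) 1). pose proof (Rmin_r (eps/8) 1). fold eta in H, H0.
  destruct (W eta Heta) as [d2 [Hd2 B2]].
  rewrite E3 in B2.
  exists (Rmin d1 d2). split. apply Rmin_glb_lt; auto.
  pose proof (Rmin_l d1 d2). pose proof (Rmin_r d1 d2).
  assert (Hwm : w < M + 1).
  { set (t0 := Rmin d1 d2 / 2). assert (0 < Rmin d1 d2) by (apply Rmin_glb_lt; auto).
    specialize (B1 t0 ltac:(unfold t0; lra)). specialize (B2 t0 ltac:(unfold t0; lra)). fold M in B1. lra. }
  intros t t' Ht Ht'.
  pose proof (B2 t ltac:(lra)) as C1.
  pose proof (B2 t' ltac:(lra)) as C2.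
  assert (w * ka <= (M + 1) * ka) by (apply Rmult_le_compat_r; lra).
  assert ((M + 1) * ka = eps / 4) by (unfold ka; field; lra).
  apply Rabs_def1; nra.
Qed.

Lemma limQ g : Hg g -> J_differentiable_on_S g ->
  exists d, 0 < d /\ forall eps, 0 < eps -> exists del, 0 < del /\
    forall t, 0 < t < del -> Rabs (Gf g t / t - d) < eps.
Proof.
  intros HG HJ.
  set (u := fun n : nat => Gf g (/ INR (S n)) / / INR (S n)).
  assert (Hsm : forall del, 0 < del -> exists N, forall n, (N <= n)%nat -> 0 < / INR (S n) < del).
  { intros del Hd. destruct (archimed_cor1 del Hd) as [N [HN HN0]]. exists N. intros n Hn.
    assert (0 < INR N) by (apply lt_0_INR; auto).
    assert (INR N <= INR (S n)) by (apply le_INR; lia).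
    split. apply Rinv_0_lt_compat; lra.
    apply Rle_lt_trans with (/ INR N); auto. apply Rinv_le_contravar; lra. }
  assert (Hc : Cauchy_crit u).
  { intros eps He. destruct (cauchyQ g HG HJ eps He) as [del [Hd C]].
    destruct (Hsm del Hd) as [N HN]. exists N. intros n m Hn Hm. unfold R_dist, u.
    apply C; auto. }
  destruct (Rcomplete.R_complete u Hc) as [l Hl].
  assert (Hlim : forall eps, 0 < eps -> exists del, 0 < del /\ forall t, 0 < t < del -> Rabs (Gf g t / t - l) < eps).
  { intros eps He. destruct (cauchyQ g HG HJ (eps/2) ltac:(lra)) as [del [Hd C]].
    exists del. split; auto. intros t Ht.
    destruct (Hl (eps/2) ltac:(lra)) as [N1 HN1]. destruct (Hsm del Hd) as [N2 HN2].
    set (n := Nat.max N1 N2).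
    specialize (HN1 n ltac:(unfold n; lia)). specialize (HN2 n ltac:(unfold n; lia)).
    unfold R_dist, u in HN1. specialize (C t _ Ht HN2).
    replace (Gf g t / t - l) with ((Gf g t / t - Gf g (/ INR (S n)) / / INR (S n)) + (Gf g (/ INR (S n)) / / INR (S n) - l)) by ring.
    eapply Rle_lt_trans. apply Rabs_triang. lra. }
  exists l. split; auto.
  destruct (window g HG HJ 1 ltac:(lra)) as [w1 [Hw1 W1]].
  destruct (W1 (w1/2) ltac:(lra)) as [d1 [Hd1 B1]].
  destruct (Rlt_or_le 0 l) as [|Hl0]; auto. exfalso.
  destruct (Hlim (w1/2) ltac:(lra)) as [d2 [Hd2 B2]].
  set (t0 := Rmin d1 d2 / 2). assert (0 < Rmin d1 d2) by (apply Rmin_glb_lt; auto).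
  pose proof (Rmin_l d1 d2). pose proof (Rmin_r d1 d2).
  specialize (B1 t0 ltac:(unfold t0; lra)). specialize (B2 t0 ltac:(unfold t0; lra)).
  apply Rabs_def2 in B2. lra.
Qed.

Lemma Gf_odd g : Hg g -> forall h, -1/2 < h < 1/2 -> Gf g h = - Gf g (- h).
Proof.
  intros HG h Hh. unfold Gf. destruct HG as (_&_&Hs&_).
  rewrite <- Hs by lra. replace (1 - (1 / 2 + - h)) with (1 / 2 + h) by lra. reflexivity.
Qed.

Lemma G_deriv g : Hg g -> J_differentiable_on_S g -> exists d, 0 < d /\ derivable_pt_lim (Gf g) 0 d.
Proof.
  intros HG HJ. destruct (limQ g HG HJ) as [d [Hd L]]. exists d. split; auto.
  intros eps He. destruct (L eps He) as [del [Hdel B]].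
  assert (0 < Rmin del (1/2)) by (apply Rmin_glb_lt; lra).
  exists (mkposreal _ H). intros h Hh0 Hh. simpl in Hh.
  pose proof (Rmin_l del (1/2)). pose proof (Rmin_r del (1/2)).
  assert (G0 : Gf g 0 = 0) by (unfold Gf; rewrite Rplus_0_r; apply g_half; auto).
  rewrite G0, Rplus_0_l, Rminus_0_r.
  destruct (Rle_or_lt 0 h) as [Hp|Hn].
  - destruct Hp as [Hp|Hp]; [|congruence]. rewrite Rabs_right in Hh by lra. apply B; lra.
  - rewrite Rabs_left in Hh by lra. rewrite (Gf_odd g HG h) by lra.
    replace (- Gf g (- h) / h) with (Gf g (- h) / (- h)) by (field; lra). apply B; lra.
Qed.

Lemma backward g : Hg g -> J_differentiable_on_S g ->
  forall a, 0 < a < 1 -> ex_derive g a /\ Derive g a <> 0.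
Proof.
  intros HG HJ a Ha.
  destruct (G_deriv g HG HJ) as [d [Hd Dd]].
  pose proof (lam_pos g HG HJ a Ha) as Hla.
  pose proof (Derive_correct _ _ (partial_ex g HJ a a Ha Ha)) as DJ.
  change (is_derive (fun x => Jfun g x a) a (lam g a)) in DJ.
  assert (D1 : is_derive (fun x => Jfun g x a - 1/2) a (lam g a)).
  { apply is_derive_Reals. apply is_derive_Reals in DJ.
    intros eps He. destruct (DJ eps He) as [del Hdel]. exists del. intros h Hh0 Hh.
    replace (Jfun g (a + h) a - 1 / 2 - (Jfun g a a - 1 / 2)) with (Jfun g (a + h) a - Jfun g a a) by ring.
    apply Hdel; auto. }
  apply is_derive_Reals in Dd.
  assert (D2 : is_derive (Gf g) ((fun x => Jfun g x a - 1/2) a) d).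
  { rewrite (J_diag g HG). replace (1/2 - 1/2) with 0 by ring. exact Dd. }
  pose proof (is_derive_comp (Gf g) (fun x => Jfun g x a - 1/2) a _ _ D2 D1) as D3.
  assert (D4 : is_derive g a (lam g a * d)).
  { apply is_derive_Reals. apply is_derive_Reals in D3.
    intros eps He. destruct (D3 eps He) as [del Hdel]. exists del. intros h Hh0 Hh.
    specialize (Hdel h Hh0 Hh).
    assert (EG : forall x, Gf g (Jfun g x a - 1/2) = g x - g a).
    { intros x. unfold Gf. replace (1/2 + (Jfun g x a - 1/2)) with (Jfun g x a) by ring. apply g_J; auto. }
    rewrite !EG in Hdel. replace (g (a + h) - g a - (g a - g a)) with (g (a + h) - g a) in Hdel by ring.
    unfold scal in Hdel; simpl in Hdel; unfold mult in Hdel; simpl in Hdel. exact Hdel. }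
  split. exists (lam g a * d). exact D4.
  rewrite (is_derive_unique _ _ _ D4). apply Rgt_not_eq. apply Rmult_lt_0_compat; auto.
Qed.


Theorem proposition5p7 (g : R -> R)
  (Hcont : forall a, 0 < a < 1 -> continuous g a)
  (Hincr : forall a b, 0 < a < 1 -> 0 < b < 1 -> a < b -> g a < g b)
  (Hsym : forall a, 0 < a < 1 -> g (1 - a) = - g a)
  (Hlim : filterlim g (at_right 0) (Rbar_locally m_infty)) :
  ((forall a, 0 < a < 1 ->
      ex_derive g a /\ continuous (Derive g) a /\ Derive g a <> 0) ->
    J_differentiable_on_S g)
  /\
  (J_differentiable_on_S g ->
    forall a, 0 < a < 1 -> ex_derive g a /\ Derive g a <> 0).
Proof.
  assert (HG : Hg g) by (repeat split; auto).
  split.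
  - apply forward; auto.
  - apply backward; auto.
Qed.
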